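(* For any graph $G$ and integers $k\ge 2$, $r\ge 3$, $R_r(\mathcal{B}(G),k)\le R(G,k)+r-2$, where $R(G,k)$ is the classical $k$-color Ramsey number of $G$.
   Context: For a graph $G$, a hypergraph $H$ is a Berge-$G$ hypergraph if there are an injective map $\phi:V(G)\to V(H)$ and pairwise distinct hyperedges $e_{xy}\in E(H)$, one for each $xy\in E(G)$, with $\phi(x),\phi(y)\in e_{xy}$. $\mathcal{B}(G)$ denotes the family of all Berge-$G$ hypergraphs. For a family $\mathcal{H}$ of $r$-uniform hypergraphs, $R_r(\mathcal{H},k)$ is the smallest $n$ such that every $k$-coloring of the hyperedges of the complete $r$-uniform hypergraph $K_n^r$ contains a monochromatic subhypergraph belonging to $\mathcal{H}$. $R(G,k)$ is the smallest $n$ such that every $k$-coloring of the edges of $K_n$ contains a monochromatic copy of $G$. *)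

(* Defs.v *)
From mathcomp Require Import all_boot.
Set Implicit Arguments. Unset Strict Implicit. Unset Printing Implicit Defensive.

(* Edge colourings of K_n (vertex set 'I_n) with k colours are functions
   c : {set 'I_n} -> 'I_k; only the values on 2-subsets matter.
   Likewise hyperedge colourings of K_n^r are c : {set 'I_n} -> 'I_k, only
   values on r-subsets matter. *)

Definition mono_copy (V : finType) (e : rel V) (n k : nat)
    (c : {set 'I_n} -> 'I_k) (i : 'I_k) : Prop :=
  exists f : V -> 'I_n, injective f /\
    forall x y, e x y -> c [set f x; f y] = i.

Definition ramsey_prop (V : finType) (e : rel V) (k n : nat) : Prop :=
  forall c : {set 'I_n} -> 'I_k, exists i : 'I_k, mono_copy e c i.

Definition is_ramsey_number (V : finType) (e : rel V) (k N : nat) : Prop :=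
  ramsey_prop e k N /\ forall m, ramsey_prop e k m -> N <= m.

Definition is_berge (V : finType) (e : rel V) (W : finType)
    (H : {set {set W}}) : Prop :=
  exists phi : V -> W, injective phi /\
  exists h : V -> V -> {set W},
    (forall x y, e x y ->
       [/\ h x y = h y x, h x y \in H, phi x \in h x y & phi y \in h x y]) /\
    (forall x y x' y', e x y -> e x' y' -> h x y = h x' y' ->
       [set x; y] = [set x'; y']).

Definition berge_ramsey_prop (V : finType) (e : rel V) (r k n : nat) : Prop :=
  forall c : {set 'I_n} -> 'I_k, exists i : 'I_k,
  exists H : {set {set 'I_n}},
    (forall A, A \in H -> #|A| = r /\ c A = i) /\ is_berge e H.

Definition is_berge_ramsey_number (V : finType) (e : rel V) (r k M : nat)
    : Prop :=
  berge_ramsey_prop e r k M /\ forall m, berge_ramsey_prop e r k m -> M <= m.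

(* Main.v *)
Require Import Defs.
From mathcomp Require Import all_boot.
From Stdlib Require Import Classical.
From mathcomp Require Import zify.
From Stdlib Require Import Lia.

Lemma pair_imset (T U : finType) (g : T -> U) (a b : T) :
  g @: [set a; b] = [set g a; g b].
Proof.
apply/setP => z; apply/imsetP/set2P.
- by case=> x /set2P [->|->] ->; [left|right].
- by case=> ->; [exists a | exists b]; rewrite ?set21 ?set22.
Qed.

Lemma berge_step (V : finType) (e : rel V) (k r N : nat) :
  symmetric e -> irreflexive e -> 3 <= r ->
  ramsey_prop e k N -> berge_ramsey_prop e r k (N + r - 2).
Proof.
move=> esym eirr hr HN c.
have hle : N <= N + r - 2 by rewrite -addnBA ?leq_addr //; apply: leq_trans hr.
pose w := @widen_ord N (N + r - 2) hle.
have winj : injective w by move=> a b /(congr1 val) /= /val_inj.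
pose W := w @: [set: 'I_N].
pose S := ~: W.
pose c' := fun A : {set 'I_N} => c ((w @: A) :|: S).
have [i [f [finj Hf]]] := HN c'.
exists i.
pose h := fun x y => (w @: [set f x; f y]) :|: S.
pose H := [set A | [exists x, exists y, e x y && (A == h x y)]].
exists H; split.
- move=> A; rewrite inE => /existsP [x /existsP [y /andP [exy /eqP ->]]].
  split; last exact: Hf.
  have sub : w @: [set f x; f y] \subset W by apply: imsetS; apply: subsetT.
  have dis : (w @: [set f x; f y]) :&: S = set0.
    by apply/setP => z; rewrite !inE; apply/negbTE; apply/nandP;
       case: (boolP (z \in _)) => hz; [right; rewrite negbK (subsetP sub)|left].
  have := cardsUI (w @: [set f x; f y]) S; rewrite dis cards0 addn0 => ->.
  rewrite card_imset // cards2.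
  have -> : (f x != f y) by rewrite (inj_eq finj); apply/eqP => exy'; move: exy; rewrite exy' eirr.
  have cS := cardsC W; rewrite card_imset // cardsT !card_ord in cS.
  rewrite /S; lia.
- exists (fun x => w (f x)); split; first by move=> a b /winj /finj.
  exists h; split.
  + move=> x y exy; split.
    * by rewrite /h setUC [in RHS]setUC [[set f y; f x]]setUC.
    * by rewrite inE; apply/existsP; exists x; apply/existsP; exists y; rewrite exy eqxx.
    * by rewrite /h inE; apply/orP; left; apply: imset_f; rewrite set21.
    * by rewrite /h inE; apply/orP; left; apply: imset_f; rewrite set22.
  + move=> x y x' y' _ _ /(congr1 (fun A => A :&: W)).
    have key : forall X : {set 'I_(N + r - 2)}, X \subset W -> (X :|: S) :&: W = X.
      move=> X XW; apply/setP => z; rewrite !inE.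
      by case: (boolP (z \in X)) => hz /=; [rewrite (subsetP XW) | rewrite andNb].
    rewrite /h !key; try (by apply: imsetS; apply: subsetT).
    move/imset_inj => /(_ winj).
    rewrite -!(pair_imset _ _ f) => /(imset_inj finj) //.
Qed.

Lemma min_exists (P : nat -> Prop) n : P n ->
  exists M, (P M /\ forall m, P m -> M <= m) /\ M <= n.
Proof.
elim: n {-2}n (leqnn n) => [|n IH] m hm Pm.
  exists m; split; [split=> // m' _ | by []]; by move: hm; rewrite leqn0 => /eqP ->.
destruct (classic (exists m', m' < m /\ P m')) as [[m' [lt Pm']]|no].
  have [M [HM le]] := IH m' (leq_trans lt hm) Pm'.
  by exists M; split=> //; apply: leq_trans (ltnW lt).
exists m; split=> //; split=> // m' Pm'; rewrite leqNgt; apply/negP => lt.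
by apply: no; exists m'.
Qed.

Theorem corollary1 (V : finType) (e : rel V) (k r : nat) :
  symmetric e -> irreflexive e -> 2 <= k -> 3 <= r ->
  forall N : nat, is_ramsey_number e k N ->
  exists M : nat, is_berge_ramsey_number e r k M /\ M <= N + r - 2.
Proof.
move=> esym eirr hk hr N [HN _].
have [M [[HM1 HM2] HM3]] := min_exists (fun n => berge_ramsey_prop e r k n) (N + r - 2) (@berge_step V e k r N esym eirr hr HN).
exists M; split; [split; [exact HM1 | exact HM2] | exact HM3].
Qed.
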